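(* Let $A$ be the $b\times v$ incidence matrix of a $(v,b,r,k,\lambda)$-BIBD with $k<v$ (rows indexed by blocks, columns by points). Let $\theta\in(0,1)$, $\alpha_1=\theta/r$, $\alpha_2=(1-\theta)/(b-r)$, and let $$Q=\alpha_1A+\alpha_2(J_{b\times v}-A)$$ be the associated transition probability matrix. Put $p^*=\theta$ and $q^*=\alpha_1\lambda+\alpha_2(r-\lambda)$. Assume that $Q$ has rank $v$ and that $p^*\neq q^*$. Define $\gamma_1=\frac{1-q^*}{p^*-q^*}$, $\gamma_2=\frac{-q^*}{p^*-q^*}$ and $$L=\gamma_1A^T+\gamma_2(J_{v\times b}-A^T).$$ Then $L$ equals the Moore–Penrose inverse $Q^+=(Q^TQ)^{-1}Q^T$ of $Q$.
   Context: A $(v,b,r,k,\lambda)$-BIBD is a set system with $v$ points and $b$ blocks, each block of size $k$, each point in exactly $r$ blocks, each pair of distinct points in exactly $\lambda$ blocks. $J_{p\times q}$ is the $p\times q$ all-ones matrix. The matrix $L$ is the unbiased linear estimator associated with the LDP protocol whose transition probability matrix is $Q$ (entry in row $B$, column $x$ is the probability that outcome $x$ is reported as block $B$). For a matrix $Q$ with linearly independent columns, its Moore–Penrose inverse is $(Q^TQ)^{-1}Q^T$. *)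

(* Defs.v *)
From HB Require Import structures.
From mathcomp Require Import all_boot all_order all_algebra.
Set Implicit Arguments. Unset Strict Implicit. Unset Printing Implicit Defensive.
Import Order.TTheory GRing.Theory Num.Theory.
Local Open Scope ring_scope.

(* A (v,b,r,k,lambda)-BIBD on points 'I_v with b (indexed, possibly repeated)
   blocks  blk : 'I_b -> {set 'I_v}.  As usual for BIBDs we require v >= 2. *)
Definition is_BIBD (v b r k lam : nat) (blk : 'I_b -> {set 'I_v}) : Prop :=
  [/\ (2 <= v)%N,
      (forall B : 'I_b, #|blk B| = k),
      (forall x : 'I_v, #|[set B : 'I_b | x \in blk B]| = r) &
      (forall x y : 'I_v, x != y ->
          #|[set B : 'I_b | (x \in blk B) && (y \in blk B)]| = lam)].

Definition incidence (R : nzRingType) (v b : nat) (blk : 'I_b -> {set 'I_v})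
  : 'M[R]_(b, v) := \matrix_(B < b, x < v) (x \in blk B)%:R.

(* Moore-Penrose inverse of a matrix with linearly independent columns. *)
Definition mp_inverse (R : fieldType) (m n : nat) (Q : 'M[R]_(m, n)) : 'M[R]_(n, m) :=
  invmx (Q^T *m Q) *m Q^T.

(* Main.v *)
Require Import Defs.
From HB Require Import structures.
From mathcomp Require Import all_boot all_order all_algebra.
Import Order.TTheory GRing.Theory Num.Theory.
Local Open Scope ring_scope.
From mathcomp Require Import ring.

Lemma sumP (R : comNzRingType) (T : finType) (P : pred T) :
  \sum_t (P t)%:R = #|[set t | P t]|%:R :> R.
Proof.
rewrite -natr_sum -sum1_card; congr (_%:R); rewrite [RHS]big_mkcond; apply: eq_bigr => t _.
by rewrite inE; case: (P t).
Qed.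

Lemma sumaff (R : comNzRingType) (T : finType) (P1 P2 : pred T) (c1 c2 e1 e2 : R) :
 \sum_t (c1 * (P1 t)%:R + c2 * (1 - (P1 t)%:R)) * (e1 * (P2 t)%:R + e2 * (1 - (P2 t)%:R))
 = #|T|%:R * c2 * e2 + #|[set t | P2 t]|%:R * c2 * (e1 - e2) + #|[set t | P1 t]|%:R * (c1 - c2) * e2
   + #|[set t | P1 t && P2 t]|%:R * (c1-c2)*(e1-e2).
Proof.
have H t : (c1 * (P1 t)%:R + c2 * (1 - (P1 t)%:R)) * (e1 * (P2 t)%:R + e2 * (1 - (P2 t)%:R)) = c2*e2 + (P2 t)%:R * (c2*(e1-e2)) + (P1 t)%:R * ((c1-c2)*e2) + (P1 t && P2 t)%:R * ((c1-c2)*(e1-e2)).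
  rewrite -mulnb natrM; ring.
rewrite (eq_bigr _ (fun t _ => H t)) !big_split /= -!mulr_suml sumr_const !sumP.
rewrite -[_ *+ #|T|]mulr_natl; ring.
Qed.

Lemma arith (R : fieldType) (D q a1 a2 b r N d g1 g2 : R) :
  D != 0 -> g1 - g2 = 1 / D -> g2 = - q / D ->
  (a1 - a2) * r + a2 * b = 1 -> - q + r * a2 + N * (a1 - a2) = d * D ->
  b * g2 * a2 + r * g2 * (a1 - a2) + r * (g1 - g2) * a2 + N * (g1 - g2) * (a1 - a2) = d.
Proof.
move=> hD h12 h2 h1 h.
have -> : b * g2 * a2 + r * g2 * (a1 - a2) + r * (g1 - g2) * a2 + N * (g1 - g2) * (a1 - a2)
  = (- q * ((a1 - a2) * r + a2 * b) + r * a2 + N * (a1 - a2)) / D.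
  rewrite h12 h2; field; exact: hD.
by rewrite h1 mulr1 h; field.
Qed.

Theorem mainTheorem3 (R : realFieldType) (v b r k lam : nat)
  (blk : 'I_b -> {set 'I_v}) (theta : R) :
  is_BIBD r k lam blk -> (k < v)%N ->
  0 < theta -> theta < 1 ->
  let A : 'M[R]_(b, v) := incidence R blk in
  let alpha1 := theta / r%:R in
  let alpha2 := (1 - theta) / (b%:R - r%:R) in
  let Q : 'M[R]_(b, v) := alpha1 *: A + alpha2 *: (const_mx 1 - A) in
  let pstar := theta in
  let qstar := alpha1 * lam%:R + alpha2 * (r%:R - lam%:R) in
  \rank Q = v ->
  pstar != qstar ->
  let gamma1 := (1 - qstar) / (pstar - qstar) in
  let gamma2 := (- qstar) / (pstar - qstar) in
  let L : 'M[R]_(v, b) := gamma1 *: A^T + gamma2 *: (const_mx 1 - A^T) in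
  L = mp_inverse Q.
Proof.
move=> [hv hk hr hl] hkv ht0 ht1 A a1 a2 Q p q hrank hpq g1 g2 L.
have x0 : 'I_v := Ordinal (leq_trans (isT : (0 < 2)%N) hv).
have Aij B x : A B x = (x \in blk B)%:R by rewrite /A /incidence mxE.
have hr0 : r != 0%N.
  apply/eqP => r0.
  have nin B x : x \notin blk B.
    apply/negP => xB.
    have := hr x; rewrite r0 => /cards0_eq/setP/(_ B); by rewrite !inE xB.
  have QE : Q = (const_mx a2 : 'M_(b, 1)) *m (const_mx 1 : 'M_(1, v)).
    apply/matrixP => B x; rewrite !mxE big_ord1 !mxE (negbTE (nin B x)).
    by rewrite mulr0 add0r subr0 mulr1.
  have : (v <= 1)%N.
    rewrite -hrank QE; apply: leq_trans (mxrankM_maxl _ _) (rank_leq_col _).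
  by rewrite leqNgt (leq_trans (isT : (1 < 2)%N) hv).
have hrb : (r < b)%N.
  have hle : (r <= b)%N by rewrite -(hr x0) -[X in (_ <= X)%N]card_ord max_card.
  rewrite ltn_neqAle hle andbT; apply/eqP => rb.
  have allin x B : x \in blk B.
    have : [set B | x \in blk B] = setT.
      by apply/eqP; rewrite eqEcard subsetT /= cardsT card_ord hr rb.
    by move/setP/(_ B); rewrite !inE => ->.
  have hr0' : (0 < r)%N by rewrite lt0n.
  have B0 : 'I_b := Ordinal (leq_trans hr0' hle).
  have : blk B0 = setT by apply/setP => x; rewrite inE allin.
  by move=> e; move: (hk B0) hkv; rewrite e cardsT card_ord => ->; rewrite ltnn.
have hrR : r%:R != 0 :> R by rewrite pnatr_eq0.
have hbrR : b%:R - r%:R != 0 :> R.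
  by rewrite subr_eq0 eqr_nat neq_ltn hrb orbT.
have hD : p - q != 0 by rewrite subr_eq0.
have h1 : (a1 - a2) * r%:R + a2 * b%:R = 1.
  by rewrite /a1 /a2 /p; field; rewrite hrR hbrR.
have h12 : g1 - g2 = 1 / (p - q) by rewrite /g1 /g2; field.
have Lxy x B : L x B = g1 * (x \in blk B)%:R + g2 * (1 - (x \in blk B)%:R).
  by rewrite !mxE.
have Qxy B x : Q B x = a1 * (x \in blk B)%:R + a2 * (1 - (x \in blk B)%:R).
  by rewrite !mxE.
have LQ : L *m Q = 1%:M.
  apply/matrixP => x y; rewrite !mxE.
  under eq_bigr => B _ do rewrite Lxy Qxy.
  have := sumaff _ _ (fun B => x \in blk B) (fun B => y \in blk B) g1 g2 a1 a2.
  rewrite /= => ->; rewrite card_ord hr hr.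
  apply: (@arith R (p - q) q a1 a2 b%:R r%:R _ _ g1 g2 hD h12 erefl h1).
  case: eqVneq => [<-|hxy].
    have -> : [set t | (x \in blk t) && (x \in blk t)] = [set t | x \in blk t].
      by apply/setP => t; rewrite !inE andbb.
    rewrite hr /= mul1r /p /q /a1; field; exact: hrR.
  by rewrite hl // /q /= mul0r; ring.
have QLs : (Q *m L)^T = Q *m L.
  apply/matrixP => B B'; rewrite mxE !mxE.
  under eq_bigr => x _ do rewrite Lxy Qxy.
  under [RHS]eq_bigr => x _ do rewrite Lxy Qxy.
  rewrite (sumaff _ _ (fun x => x \in blk B') (fun x => x \in blk B)).
  rewrite (sumaff _ _ (fun x => x \in blk B) (fun x => x \in blk B')).
  have cE (C : {set 'I_v}) : #|[set t | t \in C]| = #|C| by apply: eq_card => t; rewrite inE.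
  rewrite !cE !hk.
  have -> : [set t | (t \in blk B') && (t \in blk B)] = [set t | (t \in blk B) && (t \in blk B')].
    by apply/setP => t; rewrite !inE andbC.
  by [].
have H : (Q^T *m Q) *m (L *m L^T) = 1%:M.
  rewrite -mulmxA (mulmxA Q) -QLs trmx_mul !mulmxA -trmx_mul LQ trmx1 mul1mx -trmx_mul LQ trmx1.
  by [].
have [U _] := mulmx1_unit H.
rewrite /mp_inverse.
have -> : invmx (Q^T *m Q) = L *m L^T.
  by rewrite -[invmx _]mulmx1 -H (mulmxA (invmx _)) mulVmx // mul1mx.
rewrite -mulmxA -trmx_mul QLs mulmxA LQ mul1mx.
by [].
Qed.
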